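(* Let $P$ be a set of $n$ points in general position in the plane such that the number $m$ of points of $P$ on the boundary of the convex hull of $P$ satisfies $m\in\{8,9\}$. Then $\mu(D(P))\geq\binom{n}{2}-8$.
   Context: General position means no three points collinear. $D(P)$ is the graph whose vertices are all closed segments with both endpoints in $P$, two adjacent iff disjoint. For a graph $G$ and $U\subseteq V(G)$, two distinct vertices $x,y\in U$ are $U$-mutually visible if $G$ contains a shortest $x$-$y$ path none of whose internal vertices lies in $U$; $U$ is a mutual-visibility set if every two distinct vertices of $U$ are $U$-mutually visible. $\mu(G)$ is the maximum size of a mutual-visibility set of $G$. *)

(* Defs.v *)
From HB Require Import structures.
From mathcomp Require Import all_boot all_order all_algebra.
From mathcomp Require Import all_classical all_reals topology normedtype.
Set Implicit Arguments. Unset Strict Implicit. Unset Printing Implicit Defensive.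
Import Order.TTheory GRing.Theory Num.Theory.
Import numFieldNormedType.Exports.
Local Open Scope ring_scope.
Local Open Scope classical_set_scope.

Section Graph.
Variables (T : finType) (adj : rel T).

(* x :: s is a walk from x to y; its length is size s *)
Definition is_walk (x : T) (s : seq T) (y : T) : bool :=
  path adj x s && (last x s == y).

Definition shortest_walk (x : T) (s : seq T) (y : T) : Prop :=
  is_walk x s y /\ forall s' : seq T, is_walk x s' y -> (size s <= size s')%N.

(* internal vertices of the walk x :: s (all but the two endpoints) *)
Definition internal (x : T) (s : seq T) : seq T := behead (belast x s).

Definition mutually_visible (U : {set T}) (x y : T) : Prop :=
  exists s : seq T, shortest_walk x s y /\ all (fun z => z \notin U) (internal x s).

Definition mv_set (U : {set T}) : Prop :=
  forall x y, x \in U -> y \in U -> x != y -> mutually_visible U x y.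

Definition mu : nat := \max_(U : {set T} | `[< mv_set U >]) #|U|.
End Graph.

Section Geometry.
Variable R : realType.
Definition pt := (R * R)%type.

Definition orient (a b c : pt) : R :=
  (b.1 - a.1) * (c.2 - a.2) - (b.2 - a.2) * (c.1 - a.1).

Definition collinear (a b c : pt) : Prop := orient a b c = 0.

Definition segment (a b : pt) : set pt :=
  [set q | exists2 t : R, 0 <= t <= 1 &
     q = ((1 - t) * a.1 + t * b.1, (1 - t) * a.2 + t * b.2)].

Variable n : nat.
Variable p : 'I_n -> pt.

Definition general_position : Prop :=
  forall i j k : 'I_n, i != j -> j != k -> i != k -> ~ collinear (p i) (p j) (p k).

Definition conv_hull : set pt :=
  [set q | exists w : 'I_n -> R, (forall i, 0 <= w i) /\ \sum_i w i = 1 /\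
     q = (\sum_i w i * (p i).1, \sum_i w i * (p i).2)].

Definition hull_boundary : set pt :=
  @closure (R * R)%type conv_hull `\` @interior (R * R)%type conv_hull.

Definition num_boundary_points : nat :=
  #|[set i : 'I_n | `[< hull_boundary (p i) >]]|.

(* vertices of D(P): closed segments with two (distinct) endpoints in P,
   represented by 2-element sets of indices *)
Definition seg_vertex := {S : {set 'I_n} | #|S| == 2%N}.

Definition seg_of (S : seg_vertex) : set pt :=
  [set q | exists i j : 'I_n, [/\ i \in val S, j \in val S, i != j &
                                   segment (p i) (p j) q]].

Definition D_adj : rel seg_vertex :=
  fun S T => `[< seg_of S `&` seg_of T = set0 >].
End Geometry.

(* Main.v *)
Require Import Defs.
From HB Require Import structures.
From mathcomp Require Import all_boot all_order all_algebra.
From mathcomp Require Import all_classical all_reals topology normedtype.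
From mathcomp Require Import ring lra zify.
Set Implicit Arguments. Unset Strict Implicit. Unset Printing Implicit Defensive.
Import Order.TTheory GRing.Theory Num.Theory.
Import numFieldNormedType.Exports.
Local Open Scope ring_scope.

Section Basic.
Variable R : realType.
Implicit Types a b c d q : pt R.

Lemma oC a b c : orient a b c = orient b c a.
Proof. rewrite /orient; ring. Qed.
Lemma oC2 a b c : orient a b c = orient c a b.
Proof. rewrite /orient; ring. Qed.
Lemma oA a b c : orient a c b = - orient a b c.
Proof. rewrite /orient; ring. Qed.
Lemma o_aab a b : orient a a b = 0.
Proof. rewrite /orient; ring. Qed.
Lemma o_aba a b : orient a b a = 0.
Proof. rewrite /orient; ring. Qed.
Lemma o_abb a b : orient a b b = 0.
Proof. rewrite /orient; ring. Qed.

Lemma bary a b c u f g : 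
  orient b c u * orient f g a + orient c a u * orient f g b + orient a b u * orient f g c
  = orient a b c * orient f g u.
Proof. rewrite /orient; ring. Qed.

Lemma segsep a b c d q : 0 < orient a b c -> 0 < orient a b d ->
  segment a b q -> segment c d q -> False.
Proof.
move=> hc hd [t /andP[t0 t1] ->] [s /andP[s0 s1]] /=.
case=> e1 e2.
have h0 : orient a b ((1 - t) * a.1 + t * b.1, (1 - t) * a.2 + t * b.2) = 0.
  by rewrite /orient /=; ring.
have h1 : orient a b ((1 - s) * c.1 + s * d.1, (1 - s) * c.2 + s * d.2) =
   (1 - s) * orient a b c + s * orient a b d by rewrite /orient /=; ring.
rewrite e1 e2 h1 in h0.
have : 0 < (1 - s) * orient a b c + s * orient a b d.
  by nra.
by rewrite h0 ltxx.
Qed.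

Lemma seg_sym a b q : segment a b q -> segment b a q.
Proof.
move=> [t /andP[t0 t1] ->]; exists (1 - t).
  by apply/andP; split; lra.
congr (_, _); ring.
Qed.
End Basic.
Lemma contF (R : realType) (a b : pt R) :
  continuous (fun q : pt R => orient a b q).
Proof.
move=> q; rewrite /orient.
apply: cvgB; apply: cvgM; try exact: cvg_cst.
- apply: cvgB; [exact: cvg_snd | exact: cvg_cst].
- apply: cvgB; [exact: cvg_fst | exact: cvg_cst].
Qed.

Lemma open_pos (R : realType) (a b : pt R) :
  open [set q : pt R | 0 < orient a b q]%classic.
Proof.
have -> : [set q : pt R | 0 < orient a b q]%classic = ((fun q => orient a b q) @^-1` [set x | x > 0])%classic.
  by [].
apply: open_comp; last exact: open_gt.
by move=> q _; exact: contF.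
Qed.

Lemma sum1 (R : realType) n (i : 'I_n) (F : 'I_n -> R) :
  \sum_k ((k == i)%:R * F k) = F i.
Proof.
rewrite (bigD1 i) //= eqxx mul1r big1 ?addr0 // => k /negbTE ->.
by rewrite mul0r.
Qed.

Lemma tri_in_hull (R : realType) n (p : 'I_n -> pt R) (ia ib ic : 'I_n) (q : pt R) :
  0 < orient (p ia) (p ib) q -> 0 < orient (p ib) (p ic) q ->
  0 < orient (p ic) (p ia) q -> conv_hull p q.
Proof.
set a := p ia; set b := p ib; set c := p ic.
move=> hC hA hB.
set A := orient b c q; set B := orient c a q; set C := orient a b q.
have S0 : 0 < A + B + C by rewrite addr_gt0 // addr_gt0.
have SS : A + B + C != 0 by rewrite gt_eqF.
pose w k := (A * (k == ia)%:R + B * (k == ib)%:R + C * (k == ic)%:R) / (A + B + C).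
have E : forall X : 'I_n -> R, \sum_k w k * X k = (A * X ia + B * X ib + C * X ic) / (A + B + C).
  move=> X.
  rewrite (eq_bigr (fun k => (k==ia)%:R * (A*X k/(A+B+C)) + (k==ib)%:R*(B*X k/(A+B+C)) + (k==ic)%:R*(C*X k/(A+B+C)))); last first.
    move=> k _; rewrite /w.
    move: ((k==ia)%:R : R) ((k==ib)%:R : R) ((k==ic)%:R : R) => x y z; field.
    by [].
  by rewrite !big_split /= !sum1; field.
exists w; split.
  move=> k; rewrite /w divr_ge0 ?(ltW S0) // !addr_ge0 // mulr_ge0 ?ler0n // ltW //.
split.
  have := E (fun _ => 1); rewrite !mulr1 divff // => <-.
  by apply: eq_bigr => k _; rewrite mulr1.
have k1 : A * a.1 + B * b.1 + C * c.1 = (A+B+C) * q.1 by rewrite /A /B /C /orient; ring.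
have k2 : A * a.2 + B * b.2 + C * c.2 = (A+B+C) * q.2 by rewrite /A /B /C /orient; ring.
rewrite !E k1 k2 !(mulrC (A+B+C)) !mulfK //; by case: (q).
Qed.
Section Main.
Variable R : realType.
Variable n : nat.
Variable p : 'I_n -> pt R.
Hypothesis gp : general_position p.

Local Notation o i j k := (orient (p i) (p j) (p k)).

Lemma gp0 i j k : i != j -> j != k -> i != k -> o i j k != 0.
Proof. by move=> h1 h2 h3; apply/eqP; exact: gp h1 h2 h3. Qed.

Lemma pos_dist i j k : 0 < o i j k -> [/\ i != j, j != k & i != k].
Proof.
move=> h; split; apply/eqP => e; move: h; rewrite e ?o_aab ?o_abb ?o_aba ltxx //.
Qed.

Definition insd (u a b c : 'I_n) := [&& 0 < o a b u, 0 < o b c u & 0 < o c a u].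
Definition ext (u : 'I_n) := [forall a, forall b, forall c, ~~ insd u a b c].

Lemma boundary_ext i : hull_boundary p (p i) -> ext i.
Proof.
move=> [_ Hint]; apply/forallP => a; apply/forallP => b; apply/forallP => c.
apply/negP => /and3P[h1 h2 h3]; apply: Hint.
set O := ([set q : pt R | 0 < orient (p a) (p b) q] `&` [set q | 0 < orient (p b) (p c) q]
   `&` [set q | 0 < orient (p c) (p a) q])%classic.
have oO : open O by apply: openI; [apply: openI|]; exact: open_pos.
have : nbhs (p i) O by apply: open_nbhs_nbhs; split.
by apply: filterS => q [[q1 q2] q3]; exact: tri_in_hull q1 q2 q3.
Qed.

Lemma neg_pos i j k : i != j -> j != k -> i != k -> ~~ (0 < o i j k) -> 0 < o i k j.
Proof.
move=> h1 h2 h3; rewrite -leNgt => h.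
by rewrite oA oppr_gt0 lt_neqAle h andbT; exact: gp0.
Qed.

Lemma otrans u v w x : ext u -> u != v -> u != x -> v != x ->
  0 < o u v w -> 0 < o u w x -> 0 < o u v x.
Proof.
move=> eu uv ux vx h1 h2.
case: (boolP (0 < o u v x)) => // /(neg_pos uv vx ux) h3.
move/forallP: eu => /(_ v) /forallP /(_ w) /forallP /(_ x) /negP; case.
apply/and3P; split.
- by rewrite -oC.
- by rewrite -oC.
- by rewrite -oC.
Qed.

Definition Hb (i j : 'I_n) := (i != j) && [forall k, (k != i) && (k != j) ==> (0 < o i j k)].

Lemma HbP i j k : Hb i j -> k != i -> k != j -> 0 < o i j k.
Proof. by case/andP=> _ /forallP /(_ k) h ki kj; move: h; rewrite ki kj. Qed.

Lemma succ_ex i j0 : ext i -> j0 != i -> exists j, Hb i j.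
Proof.
move=> ei j0i.
pose rk j := #|[set k | 0 < o i j k]|.
case: (@arg_maxnP _ j0 (fun j => j != i) rk j0i) => j ji jmax.
exists j; rewrite /Hb eq_sym ji /=; apply/forallP => k; apply/implyP => /andP[ki kj].
apply/negPn/negP => hk.
have hkj : 0 < o i k j by apply: neg_pos; rewrite // eq_sym.
have : (rk j < rk k)%N.
  rewrite /rk; apply: proper_card; rewrite properE; apply/andP; split.
    apply/fintype.subsetP => l; rewrite !inE => hl.
    have [_ _ il] := pos_dist hl.
    have kl : k != l by apply/eqP => e; move: hl hk; rewrite e => ->.
    by apply: (otrans ei) hkj hl => //; rewrite eq_sym.
  apply/fintype.subsetPn; exists j; rewrite !inE // o_abb ltxx //.
by move=> h; have H2 : (rk k <= rk j)%N := jmax k ki; rewrite leqNgt h in H2.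
Qed.

Lemma H_ext i j : Hb i j -> ext j.
Proof.
move=> hij; apply/forallP => a; apply/forallP => b; apply/forallP => c.
apply/negP => /and3P[h1 h2 h3].
have [ab bj aj] := pos_dist h1.
have [bc cj bj'] := pos_dist h2.
have [ca aj' cj'] := pos_dist h3.
have key := bary (p a) (p b) (p c) (p j) (p i) (p j).
rewrite o_abb mulr0 in key.
have fa x : x != j -> 0 <= orient (p i) (p j) (p x) /\ (x != i -> 0 < orient (p i) (p j) (p x)).
  move=> xj; case: (eqVneq x i) => [->|xi]; first by rewrite o_aba.
  by have h := HbP hij xi xj; split => //; exact: ltW.
have [fa1 fa2] := fa a aj; have [fb1 fb2] := fa b (bj).
have [fc1 fc2] := fa c (cj).
have : 0 < o b c j * orient (p i) (p j) (p a) + o c a j * orient (p i) (p j) (p b)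
        + o a b j * orient (p i) (p j) (p c).
  have t1 : 0 <= o b c j * orient (p i) (p j) (p a) by apply: mulr_ge0 => //; exact: ltW.
  have t2 : 0 <= o c a j * orient (p i) (p j) (p b) by apply: mulr_ge0 => //; exact: ltW.
  have t3 : 0 <= o a b j * orient (p i) (p j) (p c) by apply: mulr_ge0 => //; exact: ltW.
  case: (eqVneq a i) => [ai|ai].
  - have bi : b != i by rewrite -ai eq_sym.
    have s2 : 0 < o c a j * orient (p i) (p j) (p b) by apply: mulr_gt0; auto.
    lra.
  - have s1 : 0 < o b c j * orient (p i) (p j) (p a) by apply: mulr_gt0; auto.
    lra.
by rewrite key ltxx.
Qed.


Variables (j0 j1 : 'I_n).
Hypothesis j01 : j0 != j1.

Lemma other (i : 'I_n) : exists j : 'I_n, j != i.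
Proof.
case: (eqVneq j0 i) => [e|h]; last by exists j0.
by exists j1; rewrite -e eq_sym.
Qed.

Lemma Hb_neq i j : Hb i j -> i != j.
Proof. by case/andP. Qed.

Lemma Hb_uniq i i' j : Hb i j -> Hb i' j -> i = i'.
Proof.
move=> h h'; apply/eqP/negPn/negP => ii'; have i'i : i' != i by rewrite eq_sym.
have h1 := HbP h i'i (Hb_neq h').
have h2 := HbP h' ii' (Hb_neq h).
by move: h2; rewrite oC oC oA oppr_gt0 ltNge (ltW h1).
Qed.

Definition f i := odflt i [pick j | Hb i j].

Lemma f_spec i : Hb i (f i) \/ (f i = i /\ forall j, ~~ Hb i j).
Proof.
rewrite /f; case: pickP => [j hj|h]; first by left.
by right; split => // j; rewrite h.
Qed.

Lemma fH i : ext i -> Hb i (f i).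
Proof.
move=> ei; case: (f_spec i) => // [[_ h]].
have [j ji] := other i; have [k hk] := succ_ex ei ji.
by move: (h k); rewrite hk.
Qed.

Lemma f_inj : injective f.
Proof.
have side i i' : Hb i (f i) -> f i' = i' -> (forall j, ~~ Hb i' j) -> f i = f i' -> i = i'.
  move=> h e nh e'; rewrite e in e'; rewrite e' in h.
  by have := fH (H_ext h); rewrite e => /(negP (nh _)).
move=> i i' e.
case: (f_spec i) => [h|[e1 n1]]; case: (f_spec i') => [h'|[e2 n2]].
- by apply: Hb_uniq h _; rewrite e.
- exact: side h e2 n2 e.
- by apply/esym; apply: side h' e1 n1 (esym e).
- by rewrite -e1 e e2.
Qed.

Variable x0 : 'I_n.
Hypothesis ex0 : ext x0.

Local Notation x k := (iter k f x0).
Local Notation L := (order f x0).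

Lemma x_ext k : ext (x k).
Proof. elim: k => //= k ih; exact: H_ext (fH ih). Qed.

Lemma xH k : Hb (x k) (x k.+1).
Proof. exact: fH (x_ext k). Qed.

Lemma x_inj i j : (i < L)%N -> (j < L)%N -> x i = x j -> i = j.
Proof.
move=> hi hj e; rewrite -(findex_iter hi) -(findex_iter hj).
by rewrite e.
Qed.

Lemma L_gt1 : (1 < L)%N.
Proof.
have L0 : (0 < L)%N.
  rewrite /order; apply/card_gt0P; exists x0; exact: connect0.
rewrite ltn_neqAle L0 andbT; apply/negP => /eqP e.
have := iter_order f_inj x0; rewrite -e /= => fx.
by have := Hb_neq (xH 0); rewrite /= fx eqxx.
Qed.

Lemma cover y : ext y -> fconnect f x0 y.
Proof.
move=> ey; apply/negPn/negP => ny.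
have yx k : y != x k.
  by apply/eqP => e; move: ny; rewrite e fconnect_iter.
have step k : 0 < o y (x k) (x k.+1).
  by rewrite -oC2; apply: HbP (xH k) (yx k) (yx k.+1).
have claim k : (0 < k < L)%N -> 0 < o y x0 (x k).
  elim: k => // k ih /andP[_ kL].
  case: (posnP k) => [->|k0]; first exact: (step 0).
  apply: (otrans ey _ _ _ (ih _) (step k)).
  - exact: (yx 0).
  - exact: yx.
  - apply/eqP => e; have := @x_inj 0 k.+1 (ltn_trans (ltn0Sn k) kL) kL e.
    by [].
  - by rewrite k0 ltnW.
have h1 := claim L.-1; rewrite prednK ?leqnn ?andbT in h1; last exact: ltnW L_gt1.
have h2 := step L.-1.
rewrite prednK in h2; last exact: ltnW L_gt1.
rewrite iter_order in h2; last exact: f_inj.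
have h1' : 0 < o y x0 (x L.-1) by apply: h1; have := L_gt1; rewrite -ltn_predRL.
by move: h2; rewrite oA oppr_gt0 ltNge (ltW h1').
Qed.


Lemma card_ext : (#|[set y | ext y]| <= L)%N.
Proof.
rewrite /order; apply: subset_leq_card; apply/fintype.subsetP => y; rewrite inE.
exact: cover.
Qed.

Lemma x_neq a b : a != b -> (a < L)%N -> (b < L)%N -> x a != x b.
Proof. by move=> ab aL bL; apply/eqP => e; move/eqP: ab; apply; exact: x_inj e. Qed.

Lemma conv_step i k : (i < k)%N -> (k.+1 < L)%N -> 0 < o (x i) (x k) (x k.+1).
Proof.
move=> ik kL; rewrite oC; apply: (HbP (xH k)).
- by apply: x_neq; rewrite ?(ltn_eqF ik) ?(ltn_trans ik) ?(ltn_trans _ kL) //.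
- apply: x_neq; rewrite ?(ltn_eqF (ltn_trans ik (ltnSn k))) //.
  by rewrite (ltn_trans ik) // ltnW.
Qed.

Lemma conv i j k : (i < j)%N -> (j < k)%N -> (k < L)%N -> 0 < o (x i) (x j) (x k).
Proof.
move=> ij; elim: k => // k ih jk kL.
case: (ltngtP j k) => [jk'|kj|ejk].
- apply: (otrans (x_ext i) _ _ _ (ih jk' (ltnW kL)) (conv_step (ltn_trans ij jk') kL)).
  + by apply: x_neq; rewrite ?(ltn_eqF ij) ?(ltn_trans ij) ?(ltn_trans jk') // ltnW.
  + apply: x_neq; rewrite ?(ltn_eqF (ltn_trans ij (ltn_trans jk' (ltnSn k)))) //.
    by rewrite (ltn_trans ij) // (ltn_trans jk') // ltnW.
  + apply: x_neq; rewrite ?(ltn_eqF (ltn_trans jk' (ltnSn k))) //.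
    by rewrite (ltn_trans jk') // ltnW.
- by move: jk; rewrite ltnS leqNgt kj.
- by rewrite ejk; apply: conv_step; rewrite // -ejk.
Qed.

End Main.


Lemma set2_eq (T : finType) (A : {set T}) a b :
  #|A| = 2%N -> a \in A -> b \in A -> a != b -> A = [set a; b].
Proof.
move=> cA aA bA ab; apply/eqP; rewrite eq_sym eqEcard cards2 ab cA leqnn andbT.
by apply/fintype.subsetP => z; rewrite !inE => /orP[]/eqP->.
Qed.

Lemma set3_contra (T : finType) (A : {set T}) a b c :
  #|A| = 2%N -> a \in A -> b \in A -> c \in A -> a != b -> a != c -> b != c -> False.
Proof.
move=> cA aA bA cA' ab ac bc; move: cA'; rewrite (set2_eq cA aA bA ab) !inE.
by rewrite eq_sym (negbTE ac) eq_sym (negbTE bc).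
Qed.

Lemma cards2_eq (T : finType) (a b : T) : a != b -> #|[set a; b]| == 2%N.
Proof. by move=> ab; rewrite cards2 ab. Qed.

Lemma seg_card n (S : seg_vertex n) : #|val S| = 2%N.
Proof. exact/eqP/(valP S). Qed.

Section Comb.
Variable R : realType.
Variable n : nat.
Variable p : 'I_n -> pt R.

Lemma adjL (S T : seg_vertex n) u v : val S = [set u; v] ->
  (forall k, k \in val T -> 0 < orient (p u) (p v) (p k)) -> D_adj p S T.
Proof.
move=> hS hT; rewrite /D_adj; apply/asboolP; apply/seteqP; split => // q.
move=> [[i [j [iS jS ij sij]]] [k [l [kT lT kl skl]]]].
have hk := hT k kT; have hl := hT l lT.
move: iS jS ij sij; rewrite hS !inE => /orP[]/eqP-> /orP[]/eqP->; rewrite ?eqxx //.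
- by move=> _ s1; exact: segsep hk hl s1 skl.
- by move=> _ /seg_sym s1; exact: segsep hk hl s1 skl.
Qed.

Lemma adj_sym (S T : seg_vertex n) : D_adj p S T -> D_adj p T S.
Proof. by rewrite /D_adj setIC. Qed.

Variable x : nat -> 'I_n.
Hypothesis xinj : forall a b, (a < 8)%N -> (b < 8)%N -> x a = x b -> a = b.
Hypothesis edge : forall k m, (k < 4)%N -> m != x (2 * k) -> m != x (2 * k).+1 ->
  0 < orient (p (x (2 * k))) (p (x (2 * k).+1)) (p m).
Hypothesis cv : forall i j k, (i < j)%N -> (j < k)%N -> (k < 8)%N ->
  0 < orient (p (x i)) (p (x j)) (p (x k)).

Definition ws := [:: [set x 0; x 1]; [set x 2; x 3]; [set x 4; x 5]; [set x 6; x 7];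
  [set x 0; x 4]; [set x 0; x 5]; [set x 1; x 4]; [set x 1; x 5]].

Definition Gl (S T : seg_vertex n) :=
  exists w : seg_vertex n, val w \in ws /\ D_adj p S w /\ D_adj p w T.

Lemma xneq a b : (a < 8)%N -> (b < 8)%N -> a != b -> x a != x b.
Proof. by move=> ha hb ab; apply/eqP => e; move/eqP: ab; apply; exact: xinj. Qed.

Lemma hit (S T : seg_vertex n) k : (k < 4)%N ->
  Gl S T \/ exists2 a, (a == 2 * k)%N || (a == (2 * k).+1)%N & x a \in val S :|: val T.
Proof.
move=> k4.
case: (boolP (x (2 * k) \in val S :|: val T)) => h0.
  by right; exists (2 * k)%N; rewrite ?eqxx.
case: (boolP (x (2 * k).+1 \in val S :|: val T)) => h1.
  by right; exists (2 * k).+1; rewrite ?eqxx ?orbT.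
left.
have ne : x (2 * k) != x (2 * k).+1.
  by apply: xneq; rewrite ?(ltn_eqF (ltnSn _)) //; lia.
exists (exist _ [set x (2 * k); x (2 * k).+1] (cards2_eq ne)); split.
  rewrite /=; move: k4; case: k {h0 h1 ne} => [|[|[|[|k]]]] //= _; by rewrite !inE eqxx ?orbT.
have pos U : (forall m, m \in U -> m \in val S :|: val T) ->
    forall m, m \in U -> 0 < orient (p (x (2 * k))) (p (x (2 * k).+1)) (p m).
  move=> hU m /hU mST; apply: edge => //; apply/eqP => e.
    by move: h0; rewrite -e mST.
  by move: h1; rewrite -e mST.
split; [apply: adj_sym|]; apply: adjL => //; apply: pos => m; rewrite inE => -> //.
by rewrite orbT.
Qed.


Lemma core2 (S T : seg_vertex n) a0 a1 a2 a3 :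
  (a0 < a1)%N -> (a1 < a2)%N -> (a2 < a3)%N -> (a3 < 8)%N ->
  x a0 \in val S -> x a2 \in val T -> x a1 \in val S :|: val T -> x a3 \in val S :|: val T ->
  D_adj p S T \/ D_adj p T S.
Proof.
move=> h01 h12 h23 h3 m0 m2 m1 m3; rewrite !inE in m1 m3.
have b2 : (a2 < 8)%N := ltn_trans h23 h3.
have b1 : (a1 < 8)%N := ltn_trans h12 b2.
have b0 : (a0 < 8)%N := ltn_trans h01 b1.
have h02 := ltn_trans h01 h12.
have h13 := ltn_trans h12 h23.
have h03 := ltn_trans h02 h23.
have d01 : x a0 != x a1 by apply: xneq; rewrite ?ltn_eqF.
have d02 : x a0 != x a2 by apply: xneq; rewrite ?ltn_eqF.
have d03 : x a0 != x a3 by apply: xneq; rewrite ?ltn_eqF.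
have d12 : x a1 != x a2 by apply: xneq; rewrite ?ltn_eqF.
have d13 : x a1 != x a3 by apply: xneq; rewrite ?ltn_eqF.
have d23 : x a2 != x a3 by apply: xneq; rewrite ?ltn_eqF.
case: (boolP (x a1 \in val S)) => s1.
- have eS := set2_eq (seg_card S) m0 s1 d01.
  have t3 : x a3 \in val T.
    move: m3; case: (boolP (x a3 \in val S)) => //= s3 _.
    by case: (set3_contra (seg_card S) m0 s1 s3 d01 d03 d13).
  have eT := set2_eq (seg_card T) m2 t3 d23.
  left; apply: (adjL eS) => m; rewrite eT !inE => /orP[]/eqP->.
    exact: cv h01 h12 b2.
  exact: cv h01 h13 h3.
- have t1 : x a1 \in val T by move: m1; rewrite (negbTE s1).
  have eT := set2_eq (seg_card T) t1 m2 d12.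
  have s3 : x a3 \in val S.
    move: m3; case: (boolP (x a3 \in val T)) => [t3|]; last by rewrite orbF.
    by case: (set3_contra (seg_card T) t1 m2 t3 d12 d13 d23).
  have eS := set2_eq (seg_card S) m0 s3 d03.
  right; apply: (adjL eT) => m; rewrite eS !inE => /orP[]/eqP->.
    by rewrite oC2; exact: cv h01 h12 b2.
  exact: cv h12 h23 h3.
Qed.

Lemma ws_mem a0 a2 : (a0 < 2)%N -> (4 <= a2 < 6)%N -> [set x a0; x a2] \in ws.
Proof.
move=> h0 /andP[h2 h2'].
have [e0|e0] : a0 = 0%N \/ a0 = 1%N by move: h0; clear; lia.
all: have [e2|e2] : a2 = 4%N \/ a2 = 5%N by move: h2 h2'; clear; lia.
all: rewrite e0 e2 in_cons ?eqxx //= in_cons ?eqxx ?orbT //.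
all: rewrite !in_cons eqxx !orbT //.
Qed.

Lemma hk_bounds a k : (a == 2 * k)%N || (a == (2 * k).+1)%N -> (2 * k <= a)%N && (a < 2 * k + 2)%N.
Proof. by case/orP => /eqP->; clear; lia. Qed.

Lemma core (S T : seg_vertex n) : val S \notin ws -> val T \notin ws -> ~~ D_adj p S T -> Gl S T.
Proof.
move=> nS nT nST.
case: (hit S T (k := 0)) => // [[a0 /hk_bounds ha0 m0]].
case: (hit S T (k := 1)) => // [[a1 /hk_bounds ha1 m1]].
case: (hit S T (k := 2)) => // [[a2 /hk_bounds ha2 m2]].
case: (hit S T (k := 3)) => // [[a3 /hk_bounds ha3 m3]].
have h01 : (a0 < a1)%N by move: ha0 ha1; clear; lia.
have h12 : (a1 < a2)%N by move: ha1 ha2; clear; lia.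
have h23 : (a2 < a3)%N by move: ha2 ha3; clear; lia.
have h3 : (a3 < 8)%N by move: ha3; clear; lia.
have d02 : x a0 != x a2.
  apply: xneq; [exact: ltn_trans h01 (ltn_trans h12 (ltn_trans h23 h3))
               |exact: ltn_trans h23 h3|by rewrite ltn_eqF // (ltn_trans h01 h12)].
have wm : [set x a0; x a2] \in ws.
  by apply: ws_mem; [move: ha0|move: ha2]; clear; lia.
rewrite !inE in m0 m2.
case/orP: m0 => [s0|t0]; case/orP: m2 => [s2|t2].
- by move: nS; rewrite (set2_eq (seg_card S) s0 s2 d02) wm.
- case: (core2 h01 h12 h23 h3 s0 t2 m1 m3) => h; first by rewrite h in nST.
  by rewrite (adj_sym h) in nST.
- have m1' : x a1 \in val T :|: val S by rewrite finset.setUC.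
  have m3' : x a3 \in val T :|: val S by rewrite finset.setUC.
  case: (core2 h01 h12 h23 h3 t0 s2 m1' m3') => h; last by rewrite h in nST.
  by rewrite (adj_sym h) in nST.
- by move: nT; rewrite (set2_eq (seg_card T) t0 t2 d02) wm.
Qed.

End Comb.


Theorem lemma17 (R : realType) (n : nat) (p : 'I_n -> pt R) :
  injective p ->
  general_position p ->
  num_boundary_points p \in [:: 8%N; 9%N] ->
  ('C(n, 2) - 8 <= mu (@D_adj R n p))%N.
Proof.
move=> _ gp hm.
have E8 : (8 <= #|[set y | ext p y]|)%N.
  have : (8 <= num_boundary_points p)%N by move: hm; rewrite !inE => /orP[]/eqP->.
  move/leq_trans; apply; rewrite /num_boundary_points; apply: subset_leq_card.
  apply/fintype.subsetP => i; rewrite in_setE /= => /asboolP /asboolP h.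
  by rewrite inE; apply: boundary_ext; apply/asboolP.
have [j0 [j1 [ej0 ej1 j01]]] : exists j0 j1, [/\ j0 \in [set y | ext p y], j1 \in [set y | ext p y] & j0 != j1].
  by apply/card_gt1P; apply: leq_trans E8.
rewrite inE in ej0.
have L8 : (8 <= order (f p) j0)%N by apply: leq_trans E8 (card_ext gp j01 ej0).
pose x k := iter k (f p) j0.
have xinj a b : (a < 8)%N -> (b < 8)%N -> x a = x b -> a = b.
  by move=> ha hb; apply: x_inj; apply: leq_trans L8.
have edge k m : (k < 4)%N -> m != x (2 * k) -> m != x (2 * k).+1 ->
    0 < orient (p (x (2 * k))) (p (x (2 * k).+1)) (p m).
  by move=> _ h1 h2; apply: (HbP (xH gp j01 ej0 (2 * k))).
have cv i j k : (i < j)%N -> (j < k)%N -> (k < 8)%N ->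
    0 < orient (p (x i)) (p (x j)) (p (x k)).
  by move=> ij jk k8; exact: (conv gp j01 ej0 ij jk (leq_trans k8 L8)).
pose U := [set S : seg_vertex n | val S \notin ws x].
have mvU : mv_set (@D_adj R n p) U.
  move=> S T hS hT ST.
  have nS : val S \notin ws x by move: hS; rewrite finset.in_set.
  have nT : val T \notin ws x by move: hT; rewrite finset.in_set.
  case: (boolP (D_adj p S T)) => hST.
    exists [:: T]; split => //; split; first by rewrite /is_walk /= hST eqxx.
    case=> [|z s'] //; rewrite /is_walk /= => /eqP e.
    by move: ST; rewrite e eqxx.
  have [w [wm [hSw hwT]]] := core xinj edge cv nS nT hST.
  exists [:: w; T]; split; last by rewrite /internal /= andbT inE wm.
  split; first by rewrite /is_walk /= hSw hwT eqxx.
  case=> [|z [|z' s']] //; rewrite /is_walk /=.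
    by move=> /eqP e; move: ST; rewrite e eqxx.
  by rewrite andbT => /andP[h /eqP e]; move: hST; rewrite -e h.
have cU : ('C(n, 2) - 8 <= #|U|)%N.
  have cT : #|{: seg_vertex n}| = 'C(n, 2).
    rewrite card_sig -[n in 'C(n, 2)]card_ord -card_draws.
    by apply: eq_card => A; rewrite !inE.
  have cC : (#|~: U| <= 8)%N.
    have -> : ~: U = [set S : seg_vertex n | val S \in ws x].
      by apply/setP => S; rewrite !inE negbK.
    rewrite -(card_imset _ val_inj).
    apply: leq_trans (card_size (ws x)); apply: subset_leq_card.
    by apply/fintype.subsetP => A /imsetP [S]; rewrite inE => h ->.
  have := cardsC U; rewrite cT; lia.
apply: leq_trans cU _.
by apply: leq_bigmax_cond; apply/asboolP.
Qed.
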